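(* Let $n = 2k+1$ be an odd integer and $m = k(2k+1)$. If an edge-coloring of a complete graph contains no rainbow $n$-cycle and no rainbow $m$-cycle, then it contains no rainbow $M$-cycle for every integer $M \ge 4k^3 - 2k^2 - 8k + 8 = n^3/2 - 2n^2 - 3n/2 + 11$.
   Context: A coloring is an arbitrary (not necessarily proper) assignment of colors, from an arbitrary set, to the edges of an undirected complete graph; the graph may be finite or infinite. A rainbow $n$-cycle is a cycle through $n$ distinct vertices whose $n$ edges all receive pairwise distinct colors. *)

(* Defs.v *)
From Stdlib Require Import Arith Lia.

(* An edge-coloring of the complete graph on vertex type V (finite or
   infinite) with colors in C: an arbitrary symmetric map on pairs.
   (Values on the diagonal c x x are irrelevant: they are never used.) *)
Definition coloring (V C : Type) (c : V -> V -> C) : Prop :=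
  forall x y : V, c x y = c y x.

Definition rainbow_cycle (V C : Type) (c : V -> V -> C) (n : nat) : Prop :=
  3 <= n /\
  exists v : nat -> V,
    (forall i j, i < n -> j < n -> v i = v j -> i = j) /\
    (forall i j, i < n -> j < n ->
       c (v i) (v ((i + 1) mod n)) = c (v j) (v ((j + 1) mod n)) -> i = j).

(* Main.v *)
Require Import Defs.
From Stdlib Require Import Arith.
From Stdlib Require Import Lia ZArith Classical.
Lemma frobZ (k s Q : Z) : (1 <= k)%Z -> (1 <= s)%Z -> (s <= 2*k-2)%Z -> (0 <= Q)%Z ->
  (4*k^3+6 <= ((2*k-1)*Q + (2*k-1-s)) + 2*k^2 + 8*k)%Z -> (s*(k+1) <= Q + 1)%Z.
Proof.
  intros Hk Hs1 Hs2 HQ Hb.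
  destruct (Z.le_gt_cases (s*(k+1)) (Q+1)) as [H|H]; [exact H|exfalso].
  assert (H2 : ((2*k-1)*(Q+2) <= (2*k-1)*(s*(k+1)))%Z) by (apply Z.mul_le_mono_nonneg_l; lia).
  assert (H3 : (0 <= (2*k-2-s)*(2*k^2+k-2))%Z) by (apply Z.mul_nonneg_nonneg; nia).
  nia.
Qed.

Lemma rep k M : 1 <= k -> 3 <= M -> 4*k^3+8 <= M + 2*k^2+8*k ->
  exists x y, M = 2 + x*(2*k+1-2) + y*(k*(2*k+1)-2) /\ (1 <= x \/ 1 <= y).
Proof.
  intros Hk HM Hb.
  assert (Hp : 2*k+1-2 <> 0) by lia.
  pose proof (Nat.div_mod (M-2) _ Hp) as HD.
  pose proof (Nat.mod_upper_bound (M-2) _ Hp) as HU.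
  revert HD HU. generalize ((M-2)/(2*k+1-2)) as Q. generalize ((M-2) mod (2*k+1-2)) as r.
  intros r Q HD HU.
  destruct (Nat.eq_dec r 0) as [->|Hr].
  - exists Q, 0. split; [|left].
    + lia.
    + destruct Q; [lia|lia].
  - assert (Hf : ((Z.of_nat (2*k+1-2-r)) * (Z.of_nat k + 1) <= Z.of_nat Q + 1)%Z).
    { apply frobZ; try lia.
      assert (E : Z.of_nat (M-2) = Z.of_nat ((2*k+1-2)*Q + r)) by (f_equal; exact HD).
      rewrite Nat2Z.inj_add, Nat2Z.inj_mul in E.
      assert ((Z.of_nat (M-2) + 2*Z.of_nat k^2 + 8 * Z.of_nat k + 2 >= 4*Z.of_nat k^3+8)%Z).
      { assert ((Z.of_nat (4*k^3+8) <= Z.of_nat (M + 2*k^2+8*k))%Z) by lia.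
        rewrite !Nat2Z.inj_add, !Nat2Z.inj_mul, !Nat2Z.inj_pow in H. lia. }
      assert ((Z.of_nat (2*k+1-2) = 2 * Z.of_nat k - 1)%Z) by lia.
      assert ((Z.of_nat (2*k+1-2-r) = 2 * Z.of_nat k - 1 - Z.of_nat r)%Z) by lia.
      rewrite H0 in E. rewrite H1. lia. }
    set (s := 2*k+1-2-r) in *.
    assert (Hf' : s*(k+1) <= Q+1) by lia.
    exists (Q+1 - s*(k+1)), s. split; [|right; lia].
    set (X := Q+1 - s*(k+1)). assert (HX : Q+1 = X + s*(k+1)) by lia.
    assert (Hs : s + r = 2*k-1) by (unfold s; lia).
    clearbody X s.
    assert (E2 : k*(2*k+1)-2 + 1 = (k+1)*(2*k-1)) by nia.
    replace (2*k+1-2) with (2*k-1) in * by lia.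
    assert (M - 2 + 2 = M) by lia.
    assert (HQ : (2*k-1)*(Q+1) = (2*k-1)*X + s*((k+1)*(2*k-1))) by (rewrite HX; ring).
    assert (s*(k*(2*k+1)-2) + s = s*((k+1)*(2*k-1))) by (rewrite <- E2; ring).
    lia.
Qed.


Lemma split_cycle (V C : Type) (c : V -> V -> C) (L a : nat) :
  coloring V C c -> rainbow_cycle V C c L -> 3 <= a -> a + 1 <= L ->
  rainbow_cycle V C c a \/ rainbow_cycle V C c (L + 2 - a).
Proof.
  intros Hc [HL [v [Hv He]]] Ha HaL.
  set (e := fun i => c (v i) (v ((i + 1) mod L))).
  set (K := c (v (a-1)) (v 0)).
  assert (Hs : forall i, i + 1 < L -> (i+1) mod L = i + 1) by (intros; apply Nat.mod_small; lia).
  destruct (classic (exists p, p < a - 1 /\ e p = K)) as [[p [Hp HpK]]|Hno].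
  - right. split; [lia|].
    exists (fun i => v ((a - 1 + i) mod L)). split.
    + intros i j Hi Hj Hij.
      assert (Hmi : (a-1+i) mod L = if Nat.eq_dec i (L+1-a) then 0 else a-1+i).
      { destruct (Nat.eq_dec i (L+1-a)).
        - subst. replace (a-1+(L+1-a)) with L by lia. apply Nat.Div0.mod_same.
        - apply Nat.mod_small; lia. }
      assert (Hmj : (a-1+j) mod L = if Nat.eq_dec j (L+1-a) then 0 else a-1+j).
      { destruct (Nat.eq_dec j (L+1-a)).
        - subst. replace (a-1+(L+1-a)) with L by lia. apply Nat.Div0.mod_same.
        - apply Nat.mod_small; lia. }
      rewrite Hmi, Hmj in Hij.
      destruct (Nat.eq_dec i (L+1-a)), (Nat.eq_dec j (L+1-a)); try lia;
        apply Hv in Hij; lia.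
    + assert (Hcol : forall i, i < L + 2 - a ->
        c (v ((a - 1 + i) mod L)) (v ((a - 1 + (i + 1) mod (L + 2 - a)) mod L)) =
        if Nat.eq_dec i (L+1-a) then e p else e (a-1+i)).
      { intros i Hi. destruct (Nat.eq_dec i (L+1-a)) as [->|Hne].
        - replace ((L+1-a+1)) with (L+2-a) by lia. rewrite Nat.Div0.mod_same.
          replace (a-1+(L+1-a)) with L by lia. rewrite Nat.Div0.mod_same.
          replace (a-1+0) with (a-1) by lia. rewrite (Nat.mod_small (a-1)) by lia.
          rewrite HpK. apply Hc.
        - rewrite (Nat.mod_small (i+1)) by lia.
          rewrite (Nat.mod_small (a-1+i)) by lia. unfold e.
          f_equal. f_equal. f_equal. lia. }
      intros i j Hi Hj Hij. rewrite (Hcol i Hi), (Hcol j Hj) in Hij.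
      destruct (Nat.eq_dec i (L+1-a)), (Nat.eq_dec j (L+1-a)); try lia;
        apply He in Hij; lia.
  - left. split; [lia|]. exists v. split.
    + intros i j Hi Hj. apply Hv; lia.
    + assert (Hcol : forall i, i < a ->
        c (v i) (v ((i + 1) mod a)) = if Nat.eq_dec i (a-1) then K else e i).
      { intros i Hi. destruct (Nat.eq_dec i (a-1)) as [->|Hne].
        - replace (a-1+1) with a by lia. rewrite Nat.Div0.mod_same. reflexivity.
        - unfold e. rewrite (Nat.mod_small (i+1)) by lia. rewrite Hs by lia. reflexivity. }
      intros i j Hi Hj Hij. rewrite (Hcol i Hi), (Hcol j Hj) in Hij.
      destruct (Nat.eq_dec i (a-1)), (Nat.eq_dec j (a-1)); try lia.
      * exfalso; apply Hno; exists j; split; [lia|auto].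
      * exfalso; apply Hno; exists i; split; [lia|auto].
      * apply He in Hij; lia.
Qed.

Lemma iter_cycle (V C : Type) (c : V -> V -> C) (a : nat) :
  coloring V C c -> 3 <= a -> ~ rainbow_cycle V C c a ->
  forall x t, 3 <= t -> rainbow_cycle V C c (t + x * (a - 2)) -> rainbow_cycle V C c t.
Proof.
  intros Hc Ha Hna x. induction x as [|x IH]; intros t Ht H.
  - rewrite Nat.add_0_r in H. exact H.
  - apply IH; [exact Ht|].
    rewrite Nat.mul_succ_l in H.
    destruct (split_cycle V C c _ a Hc H Ha) as [H'|H']; [lia|contradiction|].
    set (w := x * (a - 2)) in *. replace (t + w) with (t + (w + (a - 2)) + 2 - a) by lia.
    exact H'.
Qed.

Theorem lemma10 (V C : Type) (c : V -> V -> C) (k M : nat) :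
  1 <= k ->
  coloring V C c ->
  ~ rainbow_cycle V C c (2 * k + 1) ->
  ~ rainbow_cycle V C c (k * (2 * k + 1)) ->
  4 * k ^ 3 + 8 <= M + 2 * k ^ 2 + 8 * k ->
  ~ rainbow_cycle V C c M.
Proof.
  intros Hk Hc Hn Hm Hb HR.
  assert (HM3 : 3 <= M) by (destruct HR; lia).
  assert (Hm3 : 3 <= k * (2 * k + 1)) by nia.
  destruct (rep k M Hk HM3 Hb) as [x [y [HMe Hxy]]].
  set (p := 2 * k + 1 - 2) in *. set (q := k * (2 * k + 1) - 2) in *.
  destruct x as [|x].
  - destruct y as [|y]; [lia|].
    apply Hm.
    apply (iter_cycle V C c _ Hc Hm3 Hm y); [exact Hm3|].
    fold q. replace (k * (2 * k + 1) + y * q) with M; [exact HR|].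
    rewrite HMe. rewrite Nat.mul_succ_l.
    assert (q + 2 = k * (2 * k + 1)) by (unfold q; lia). lia.
  - apply Hn.
    assert (Hn3 : 3 <= 2 * k + 1) by lia.
    apply (iter_cycle V C c _ Hc Hn3 Hn x); [exact Hn3|].
    apply (iter_cycle V C c _ Hc Hm3 Hm y); [fold p; lia|].
    fold p q. replace (2 * k + 1 + x * p + y * q) with M; [exact HR|].
    rewrite HMe. rewrite Nat.mul_succ_l.
    assert (p + 2 = 2 * k + 1) by (unfold p; lia). lia.
Qed.
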